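(* Let $G$ be a finite simple graph and $v$ a vertex of $G$ of degree $d$. Then \[-d\le \mathrm{mur}(G)-\mathrm{mur}(G\setminus\{v\})\le d+2,\] where $G\setminus\{v\}$ is the graph obtained from $G$ by deleting $v$ and its incident edges.
   Context: For a finite simple undirected graph $G$ on vertices $v_1,\dots,v_n$, let $A_G$ be its $(0,1)$-adjacency matrix, $D_G=\mathrm{diag}(d_1,\dots,d_n)$ with $d_i$ the degree of $v_i$, $I$ the $n\times n$ identity matrix and $J$ the $n\times n$ all-ones matrix. A universal adjacency matrix of $G$ is any matrix $\alpha A_G+\beta I+\gamma J+\delta D_G$ with real scalars $\alpha,\beta,\gamma,\delta$ and $\alpha\neq 0$. The minimum universal rank $\mathrm{mur}(G)$ is the minimum rank over all universal adjacency matrices of $G$. *)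

(* Defs.v *)
From HB Require Import structures.
From mathcomp Require Import all_boot all_order all_algebra.
From mathcomp Require Import boolp reals.
Set Implicit Arguments. Unset Strict Implicit. Unset Printing Implicit Defensive.
Import Order.TTheory GRing.Theory Num.Theory.
Local Open Scope ring_scope.

Definition simple_graph (T : finType) (e : rel T) : Prop :=
  symmetric e /\ irreflexive e.

Definition deg (T : finType) (e : rel T) (x : T) : nat := #|[set y | e x y]|.

Section Mats.
Variable R : realType.
Variable T : finType.
Variable e : rel T.

Definition adjmx : 'M[R]_#|T| :=
  \matrix_(i, j) (e (enum_val i) (enum_val j))%:R.

Definition degmx : 'M[R]_#|T| :=
  \matrix_(i, j) ((i == j)%:R * (deg e (enum_val i))%:R).

Definition univ_adj (a b c d : R) : 'M[R]_#|T| :=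
  a *: adjmx + b%:M + c *: const_mx 1 + d *: degmx.

Definition univ_rank_pred : pred nat :=
  fun k => `[< exists a b c d : R, a != 0 /\ \rank (univ_adj a b c d) = k >].

Lemma univ_rank_ex : exists k, univ_rank_pred k.
Proof.
exists (\rank (univ_adj 1 0 0 0)); apply/asboolP.
by exists 1, 0, 0, 0; split => //; exact: oner_neq0.
Qed.

Definition mur : nat := ex_minn univ_rank_ex.
End Mats.

Definition del_vertex (T : finType) (e : rel T) (v : T) :
  rel {x : T | x != v} := fun x y => e (val x) (val y).
Arguments del_vertex {T} e v.

(* Main.v *)
Require Import Defs.
From HB Require Import structures.
From mathcomp Require Import all_boot all_order all_algebra.
From mathcomp Require Import boolp reals.
Import Order.TTheory GRing.Theory Num.Theory.
Local Open Scope ring_scope.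

Section Aux.
Variable R : realType.

Lemma mur_spec (T : finType) (e : rel T) :
  (exists a b c d : R, a != 0 /\ \rank (univ_adj e a b c d) = mur R e) /\
  (forall a b c d : R, a != 0 -> (mur R e <= \rank (univ_adj e a b c d))%N).
Proof.
rewrite /mur; case: ex_minnP => k /asboolP Hk Hmin; split => // a b c d a0.
by apply: Hmin; apply/asboolP; exists a, b, c, d.
Qed.

Lemma rank_sum_le (I : finType) (P : pred I) m n (F : I -> 'M[R]_(m, n)) :
  (\rank (\sum_(i | P i) F i)%R <= \sum_(i | P i) \rank (F i))%N.
Proof.
apply: (big_ind2 (fun (M : 'M[R]_(m, n)) k => \rank M <= k)%N).
- by rewrite mxrank0.
- move=> M1 k1 M2 k2 h1 h2; apply: leq_trans (mxrank_add _ _) _.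
  exact: leq_add.
- by [].
Qed.

Lemma rank_diag_le m (p : pred 'I_m) (w : 'I_m -> R) :
  (\rank ((\matrix_(i, k) ((i == k)%:R * ((p i)%:R * w i)))%R : 'M[R]_m) <= #|p|)%N.
Proof.
have -> : (\matrix_(i, k) ((i == k)%:R * ((p i)%:R * w i)) : 'M[R]_m)
   = (\sum_(i | p i) (w i *: delta_mx i i))%R.
  apply/matrixP => j l; rewrite !mxE summxE.
  case pj: (p j).
  - rewrite (bigD1 j) //= big1 ?addr0.
    + by rewrite !mxE !eqxx /= mul1r mulrC eq_sym.
    + by move=> i /andP [_ nij]; rewrite !mxE (eq_sym j) (negbTE nij) /= mulr0.
  - rewrite mul0r mulr0 big1 // => i pi; rewrite !mxE.
    by case: eqP => [ji|]; [rewrite ji pi in pj | rewrite mulr0].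
apply: leq_trans (rank_sum_le _ _ _ _ _) _.
rewrite -sum1_card; apply: leq_sum => i _.
by apply: leq_trans (mxrankS (scalemx_sub (w i) (submx_refl (delta_mx i i : 'M[R]_m)))) _; rewrite mxrank_delta.
Qed.

End Aux.

Section Main.
Variable R : realType.
Variable T : finType.
Variable e : rel T.
Variable v : T.

Local Notation T' := (Specif_sig__canonical__fintype_Finite (fun x : T => x != v)).
Local Notation n := #|T|.
Local Notation m := #|T'|.

Definition fsub (i : 'I_m) : 'I_n := enum_rank (val (enum_val i)).
Definition rv : 'I_n := enum_rank v.

Lemma fsubK i : enum_val (fsub i) = val (enum_val i).
Proof. by rewrite /fsub enum_rankK. Qed.

Lemma fsub_inj : injective fsub.
Proof.
move=> i k /(congr1 enum_val); rewrite !fsubK => /val_inj.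
exact: enum_val_inj.
Qed.

Lemma fsub_neq i : fsub i != rv.
Proof.
apply/eqP => /(congr1 enum_val); rewrite fsubK /rv enum_rankK => h.
by move: (valP (enum_val i)); rewrite h eqxx.
Qed.

Lemma fsub_surj j : j != rv -> exists i, fsub i = j.
Proof.
move=> hj; have hv : enum_val j != v.
  by apply: contra hj => /eqP hj; rewrite /rv -hj enum_valK.
exists (enum_rank (exist _ (enum_val j) hv : T')).
by rewrite /fsub enum_rankK /= enum_valK.
Qed.

Lemma deg_split (x : T) :
  deg e x = (#|[set y : T' | e x (val y)]| + e x v)%N.
Proof.
rewrite /deg (cardsD1 v) inE addnC; congr (_ + _)%N.
rewrite -(card_imset _ val_inj); apply: eq_card => y; rewrite !inE.
apply/andP/imsetP.
- move=> [hy hxy]; exists (exist _ y hy : T') => //; by rewrite inE.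
- by move=> [y' hy' ->]; rewrite inE in hy'; split => //; exact: (proj2_sig y').
Qed.


Definition Smx : 'M[R]_(m, n) := rowsub fsub 1%:M.
Definition Emx : 'M[R]_n := delta_mx rv rv.

Lemma Smx_sub (M : 'M[R]_n) : mxsub fsub fsub M = Smx *m M *m Smx^T.
Proof.
have -> : Smx *m M *m Smx^T = (Smx *m (Smx *m M)^T)^T.
  by rewrite trmx_mul trmxK.
rewrite /Smx -!rowsubE; apply/matrixP => i k; by rewrite !mxE.
Qed.

Lemma Smx_id : Smx^T *m Smx + Emx = 1%:M.
Proof.
apply/matrixP => j l; rewrite !mxE.
under eq_bigr => i _ do rewrite !mxE.
have [jr|jr] := eqVneq j rv.
- rewrite big1 ?add0r; last first.
    by move=> i _; rewrite jr (negbTE (fsub_neq i)) mul0r.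
  by rewrite jr /= eq_sym.
- have [i0 hi0] := fsub_surj j jr.
  rewrite (bigD1 i0) //= big1 ?addr0; last first.
    move=> i ni; have -> : (fsub i == j) = false.
      by apply/negbTE; rewrite -hi0; apply: contra ni => /eqP/fsub_inj ->.
    by rewrite mul0r.
  by rewrite hi0 eqxx mul1r.
Qed.


Definition pN (i : 'I_m) : bool := e v (val (enum_val i)).
Definition Dn : 'M[R]_m := \matrix_(i, k) ((i == k)%:R * ((pN i)%:R * 1)).

Lemma key (se : symmetric e) (a b c d : R) :
  mxsub fsub fsub (univ_adj e a b c d) =
  univ_adj (del_vertex e v) a b c d + d *: Dn.
Proof.
apply/matrixP => i k; rewrite !mxE !fsubK (inj_eq fsub_inj).
rewrite deg_split /deg /pN (se _ v) /del_vertex natrD.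
by rewrite !mulr1 !mulrDr !addrA.
Qed.


Lemma card_pN (ie : irreflexive e) : #|pN| = deg e v.
Proof.
rewrite deg_split ie addn0 -(card_imset _ enum_val_inj).
apply: eq_card => y; rewrite !inE; apply/imsetP/idP.
- by move=> [i hi ->].
- by move=> hy; exists (enum_rank y); rewrite ?unfold_in /pN enum_rankK.
Qed.

Lemma rank_sub_le (M : 'M[R]_n) : (\rank (mxsub fsub fsub M) <= \rank M)%N.
Proof.
rewrite Smx_sub; apply: leq_trans (mxrankM_maxl _ _) _; exact: mxrankM_maxr.
Qed.

Lemma decomp (M : 'M[R]_n) :
  M = Smx^T *m (Smx *m M *m Smx^T) *m Smx + Emx *m M *m (Smx^T *m Smx) + M *m Emx.
Proof.
have -> : Smx^T *m (Smx *m M *m Smx^T) *m Smx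
        = (Smx^T *m Smx) *m M *m (Smx^T *m Smx) by rewrite !mulmxA.
by rewrite -mulmxDl -mulmxDl Smx_id mul1mx -mulmxDr Smx_id mulmx1.
Qed.

Lemma rank_up (M : 'M[R]_n) :
  (\rank M <= \rank (mxsub fsub fsub M) + 2)%N.
Proof.
rewrite {1}(decomp M) Smx_sub.
rewrite -[2%N]/(1 + 1)%N addnA.
apply: leq_trans (mxrank_add _ _) _.
apply: leq_add; last first.
  apply: leq_trans (mxrankM_maxr _ _) _.
  by rewrite mxrank_delta.
apply: leq_trans (mxrank_add _ _) _.
apply: leq_add.
  apply: leq_trans (mxrankM_maxl _ _) _; exact: mxrankM_maxr.
apply: leq_trans (mxrankM_maxl _ _) _.
apply: leq_trans (mxrankM_maxl _ _) _.
by rewrite mxrank_delta.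
Qed.


Lemma rank_Dn : (\rank Dn <= #|pN|)%N.
Proof. exact: (@rank_diag_le R _ pN (fun _ => 1)). Qed.

Lemma rank_dDn (d : R) : (\rank (d *: Dn) <= #|pN|)%N.
Proof. exact: leq_trans (mxrankS (scalemx_sub _ (submx_refl _))) rank_Dn. Qed.

Lemma lower (se : symmetric e) (ie : irreflexive e) :
  (mur R (del_vertex e v) <= mur R e + deg e v)%N.
Proof.
have [[a [b [c [d [a0 hr]]]]] _] := mur_spec R T e.
have [_ hmin] := mur_spec R _ (del_vertex e v).
apply: leq_trans (hmin a b c d a0) _.
have -> : univ_adj (del_vertex e v) a b c d
   = mxsub fsub fsub (univ_adj e a b c d) + (- d) *: Dn.
  by rewrite key // scaleNr addrK.
apply: leq_trans (mxrank_add _ _) _.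
rewrite -hr -card_pN //; apply: leq_add; [exact: rank_sub_le | exact: rank_dDn].
Qed.

Lemma upper (se : symmetric e) (ie : irreflexive e) :
  (mur R e <= mur R (del_vertex e v) + deg e v + 2)%N.
Proof.
have [[a [b [c [d [a0 hr]]]]] _] := mur_spec R _ (del_vertex e v).
have [_ hmin] := mur_spec R T e.
apply: leq_trans (hmin a b c d a0) _.
apply: leq_trans (rank_up _) _; rewrite leq_add2r key //.
apply: leq_trans (mxrank_add _ _) _.
rewrite -hr -card_pN //; apply: leq_add => //; exact: rank_dDn.
Qed.

End Main.

From mathcomp Require Import zify.

Theorem theorem17 (R : realType) (T : finType) (e : rel T) (v : T) :
  simple_graph e ->
  - ((deg e v)%:Z) <= (mur R e)%:Z - (mur R (del_vertex e v))%:Z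
  /\ (mur R e)%:Z - (mur R (del_vertex e v))%:Z <= (deg e v)%:Z + 2.
Proof.
move=> [se ie].
have h1 := @lower R T e v se ie; have h2 := @upper R T e v se ie.
split; lia.
Qed.
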